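(* Let $X$ be a real Banach space. If $\Phi:X^*\to 2^X$ is $w^*$-maximal cyclically monotone with $D(\Phi)\neq\emptyset$, then there exists a proper convex weak$^*$-lower semicontinuous function $g:X^*\to(-\infty,+\infty]$ such that $\Phi(x^* )=\partial g(x^* )\cap X$ for every $x^*\in X^*$.
   Context: $X$ is identified with its canonical image in $X^{**}$; $\partial g(x^* )\cap X=\{x\in X:\langle y^*-x^*,x\rangle\le g(y^* )-g(x^* )\ \forall y^*\in X^*\}$ for $x^*\in\operatorname{dom} g$, empty otherwise. For $\Phi:X^*\to2^X$, $D(\Phi)=\{x^*:\Phi(x^* )\ne\emptyset\}$, $\mathrm{Gr}\,\Phi=\{(x^*,x):x\in\Phi(x^* )\}$. $\Phi$ is $w^*$-monotone if $\langle x-y,x^*-y^*\rangle\ge0$ whenever $x\in\Phi(x^* )$, $y\in\Phi(y^* )$. $\Phi$ is $w^*$-cyclically monotone if for every $n\ge2$, all $x_1^*,\dots,x_n^*\in D(\Phi)$ with $x_{n+1}^*=x_1^*$ and all $x_k\in\Phi(x_k^* )$, $\sum_{k=1}^n\langle x_k,x_k^*-x_{k+1}^*\rangle\ge0$. $\Phi$ is $w^*$-maximal cyclically monotone if it is $w^*$-monotone and $\Phi=\Psi$ whenever $\Psi$ is $w^*$-cyclically monotone with $\mathrm{Gr}\,\Phi\subset\mathrm{Gr}\,\Psi$. *)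

(* Defs.v *)
From Stdlib Require Import Reals List.
Open Scope R_scope.

Record BanachSpace := {
  carrier :> Type;
  vadd : carrier -> carrier -> carrier;
  vzero : carrier;
  vopp : carrier -> carrier;
  vscal : R -> carrier -> carrier;
  vnorm : carrier -> R;
  vadd_assoc : forall x y z, vadd x (vadd y z) = vadd (vadd x y) z;
  vadd_comm : forall x y, vadd x y = vadd y x;
  vadd_0l : forall x, vadd vzero x = x;
  vadd_oppr : forall x, vadd x (vopp x) = vzero;
  vscal_addl : forall a b x, vscal (a + b) x = vadd (vscal a x) (vscal b x);
  vscal_addr : forall a x y, vscal a (vadd x y) = vadd (vscal a x) (vscal a y);
  vscal_assoc : forall a b x, vscal a (vscal b x) = vscal (a * b) x;
  vscal_1 : forall x, vscal 1 x = x;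
  vnorm_nonneg : forall x, 0 <= vnorm x;
  vnorm_eq0 : forall x, vnorm x = 0 -> x = vzero;
  vnorm_scal : forall a x, vnorm (vscal a x) = Rabs a * vnorm x;
  vnorm_triangle : forall x y, vnorm (vadd x y) <= vnorm x + vnorm y;
  vcomplete : forall u : nat -> carrier,
    (forall eps, 0 < eps -> exists N, forall m n, (N <= m)%nat -> (N <= n)%nat ->
        vnorm (vadd (u m) (vopp (u n))) < eps) ->
    exists l, forall eps, 0 < eps -> exists N, forall n, (N <= n)%nat ->
        vnorm (vadd (u n) (vopp l)) < eps
}.

Arguments vadd {_}. Arguments vopp {_}. Arguments vscal {_}. Arguments vnorm {_}.

Definition bounded_linear (X : BanachSpace) (f : X -> R) : Prop :=
  (forall x y, f (vadd x y) = f x + f y) /\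
  (forall a x, f (vscal a x) = a * f x) /\
  (exists M, forall x, Rabs (f x) <= M * vnorm x).

Definition dual (X : BanachSpace) : Type := { f : X -> R | bounded_linear X f }.

(* Duality pairing <x^*, x> = x^*(x); X is identified with its image in X^{**}. *)
Definition pair {X : BanachSpace} (xs : dual X) (x : X) : R := proj1_sig xs x.

Inductive ereal := Fin (r : R) | PInf.

Definition ele (a b : ereal) : Prop :=
  match a, b with
  | Fin x, Fin y => x <= y
  | _, PInf => True
  | PInf, Fin _ => False
  end.

Definition eadd (a b : ereal) : ereal :=
  match a, b with Fin x, Fin y => Fin (x + y) | _, _ => PInf end.

(* scaling by a strictly positive real *)
Definition escal (t : R) (a : ereal) : ereal :=
  match a with Fin x => Fin (t * x) | PInf => PInf end.

(* proper: not identically +oo (never -oo by the codomain) *)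
Definition proper_fun {X : BanachSpace} (g : dual X -> ereal) : Prop :=
  exists xs, g xs <> PInf.

(* convex: g(t a + (1-t) b) <= t g(a) + (1-t) g(b) for 0 < t < 1
   (c is the functional t a + (1-t) b, described pointwise). *)
Definition convex_fun {X : BanachSpace} (g : dual X -> ereal) : Prop :=
  forall (a b c : dual X) (t : R), 0 < t < 1 ->
    (forall x, pair c x = t * pair a x + (1 - t) * pair b x) ->
    ele (g c) (eadd (escal t (g a)) (escal (1 - t) (g b))).

Definition wstar_open {X : BanachSpace} (U : dual X -> Prop) : Prop :=
  forall y, U y -> exists (l : list X) (eps : R), 0 < eps /\
    forall z, (forall x, In x l -> Rabs (pair z x - pair y x) < eps) -> U z.

Definition wstar_lsc {X : BanachSpace} (g : dual X -> ereal) : Prop :=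
  forall r : R, wstar_open (fun xs => ~ ele (g xs) (Fin r)).

Definition subdiff_X {X : BanachSpace} (g : dual X -> ereal) (xs : dual X) (x : X) : Prop :=
  exists c, g xs = Fin c /\
    forall ys : dual X, ele (Fin (pair ys x - pair xs x)) (eadd (g ys) (Fin (- c))).

Definition mmap (X : BanachSpace) := dual X -> X -> Prop.

Definition dom_nonempty {X : BanachSpace} (Phi : mmap X) : Prop :=
  exists xs x, Phi xs x.

Definition wstar_monotone {X : BanachSpace} (Phi : mmap X) : Prop :=
  forall xs ys x y, Phi xs x -> Phi ys y ->
    0 <= pair xs (vadd x (vopp y)) - pair ys (vadd x (vopp y)).

Fixpoint rsum (n : nat) (f : nat -> R) : R :=
  match n with O => 0 | S m => rsum m f + f m end.

Definition cnext (n k : nat) : nat := if Nat.eqb (S k) n then O else S k.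

Definition wstar_cyclically_monotone {X : BanachSpace} (Phi : mmap X) : Prop :=
  forall (n : nat) (xs : nat -> dual X) (x : nat -> X), (2 <= n)%nat ->
    (forall k, (k < n)%nat -> Phi (xs k) (x k)) ->
    0 <= rsum n (fun k => pair (xs k) (x k) - pair (xs (cnext n k)) (x k)).

Definition wstar_maximal_cyclically_monotone {X : BanachSpace} (Phi : mmap X) : Prop :=
  wstar_monotone Phi /\ wstar_cyclically_monotone Phi /\
  forall Psi : mmap X, wstar_cyclically_monotone Psi ->
    (forall xs x, Phi xs x -> Psi xs x) ->
    forall xs x, Psi xs x <-> Phi xs x.

(* Main.v *)
Require Import Defs.
From Stdlib Require Import Reals Lra Lia ClassicalEpsilon Classical.
Open Scope R_scope.

Lemma rsum_ext (n : nat) (f g : nat -> R) :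
  (forall k, (k < n)%nat -> f k = g k) -> rsum n f = rsum n g.
Proof.
  induction n; simpl; intros H; [reflexivity|].
  rewrite IHn by (intros; apply H; lia). rewrite H by lia. reflexivity.
Qed.

Lemma rsum_tele (m : nat) (c : nat -> R) :
  rsum m (fun k => c (S k) - c k) = c m - c O.
Proof. induction m; simpl; [lra|]. rewrite IHm. lra. Qed.

Lemma rsum_le (n : nat) (f g : nat -> R) :
  (forall k, (k < n)%nat -> f k <= g k) -> rsum n f <= rsum n g.
Proof.
  induction n; simpl; intros H; [lra|].
  pose proof (IHn (fun k hk => H k ltac:(lia))). pose proof (H n ltac:(lia)). lra.
Qed.

Lemma rsum_cyc (n : nat) (c : nat -> R) : (1 <= n)%nat ->
  rsum n (fun k => c (cnext n k) - c k) = 0.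
Proof.
  intros Hn. destruct n as [|m]; [lia|]. simpl.
  rewrite (rsum_ext m _ (fun k => c (S k) - c k)).
  - rewrite rsum_tele. unfold cnext. rewrite Nat.eqb_refl. lra.
  - intros k hk. unfold cnext. destruct (Nat.eqb_spec (S k) (S m)); [lia|reflexivity].
Qed.

Section Construction.
Variable X : BanachSpace.
Variable Phi : mmap X.
Variable s0 : dual X.
Variable x0 : X.
Hypothesis HP0 : Phi s0 x0.

Definition SS (m : nat) (qs : nat -> dual X) (qx : nat -> X) : R :=
  rsum m (fun k => pair (qs (S k)) (qx k) - pair (qs k) (qx k)).

Definition vl (n : nat) qs qx (y : dual X) : R :=
  SS n qs qx + pair y (qx n) - pair (qs n) (qx n).

Definition chain (n : nat) qs qx : Prop :=
  qs O = s0 /\ qx O = x0 /\ (forall k, (k <= n)%nat -> Phi (qs k) (qx k)).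

Definition V (y : dual X) (v : R) : Prop :=
  exists n qs qx, chain n qs qx /\ v = vl n qs qx y.

Lemma V_ne (y : dual X) : exists v, V y v.
Proof.
  exists (vl O (fun _ => s0) (fun _ => x0) y). exists O, (fun _ => s0), (fun _ => x0).
  split; [|reflexivity]. split; [reflexivity|split;[reflexivity|]]. intros; exact HP0.
Qed.

Definition f (y : dual X) : ereal :=
  match excluded_middle_informative (bound (V y)) with
  | left hb => Fin (proj1_sig (completeness (V y) hb (V_ne y)))
  | right _ => PInf
  end.

Lemma f_ub (y : dual X) (v : R) : V y v -> ele (Fin v) (f y).
Proof.
  intros hv. unfold f. destruct excluded_middle_informative as [hb|hb]; [|exact I].
  destruct completeness as [c [hc1 hc2]]. simpl. apply hc1. exact hv.
Qed.

Lemma f_fin (y : dual X) (c : R) : f y = Fin c ->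
  (forall v, V y v -> v <= c) /\ (forall b, (forall v, V y v -> v <= b) -> c <= b).
Proof.
  unfold f. destruct excluded_middle_informative as [hb|hb]; [|discriminate].
  destruct completeness as [m [hc1 hc2]]. simpl. intros H; injection H as <-.
  split; [exact hc1|]. intros b hbb. apply hc2. exact hbb.
Qed.

Lemma f_bnd (y : dual X) (b : R) : (forall v, V y v -> v <= b) -> exists c, f y = Fin c.
Proof.
  intros H. unfold f. destruct excluded_middle_informative as [hb|hb].
  - eexists; reflexivity.
  - exfalso. apply hb. exists b. exact H.
Qed.

Lemma f_gt (y : dual X) (r : R) : ~ ele (f y) (Fin r) -> exists v, V y v /\ r < v.
Proof.
  intros H. apply NNPP. intros H2.
  assert (Hb : forall v, V y v -> v <= r).
  { intros v hv. apply Rnot_lt_le. intros hl. apply H2. exists v. auto. }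
  destruct (f_bnd y r Hb) as [c hc]. apply H. rewrite hc. simpl.
  apply (proj2 (f_fin y c hc)). exact Hb.
Qed.


Definition ext_s (n : nat) (qs : nat -> dual X) (s : dual X) :=
  fun k => if Nat.eqb k (S n) then s else qs k.
Definition ext_x (n : nat) (qx : nat -> X) (x : X) :=
  fun k => if Nat.eqb k (S n) then x else qx k.

Lemma ext_chain n qs qx s x : chain n qs qx -> Phi s x ->
  chain (S n) (ext_s n qs s) (ext_x n qx x).
Proof.
  intros [h1 [h2 h3]] hp. unfold chain, ext_s, ext_x. simpl.
  split; [exact h1|split;[exact h2|]]. intros k hk.
  destruct (Nat.eqb_spec k (S n)); [exact hp|]. apply h3. lia.
Qed.

Lemma ext_vl n qs qx s x y :
  vl (S n) (ext_s n qs s) (ext_x n qx x) y = vl n qs qx s + pair y x - pair s x.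
Proof.
  unfold vl, SS, ext_s, ext_x. simpl. rewrite Nat.eqb_refl.
  destruct (Nat.eqb_spec n (S n)); [lia|].
  rewrite (rsum_ext n _ (fun k => pair (qs (S k)) (qx k) - pair (qs k) (qx k))).
  - lra.
  - intros k hk. cbn beta. destruct (Nat.eqb_spec k n); [lia|].
    destruct (Nat.eqb_spec k (S n)); [lia|]. reflexivity.
Qed.

Hypothesis Hcyc : wstar_cyclically_monotone Phi.

Lemma vl_s0 n qs qx : chain n qs qx -> vl n qs qx s0 <= 0.
Proof.
  intros [h1 [h2 h3]]. destruct n as [|m].
  - unfold vl, SS. simpl. rewrite h1. lra.
  - assert (H := Hcyc (S (S m)) qs qx ltac:(lia) (fun k hk => h3 k ltac:(lia))).
    simpl in H.
    rewrite (rsum_ext m _ (fun k => pair (qs k) (qx k) - pair (qs (S k)) (qx k))) in H.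
    + unfold cnext in H. rewrite Nat.eqb_refl in H.
      unfold vl, SS. simpl. rewrite <- h1.
      assert (E : rsum m (fun k => pair (qs k) (qx k) - pair (qs (S k)) (qx k))
        = - rsum m (fun k => pair (qs (S k)) (qx k) - pair (qs k) (qx k))).
      { clear. induction m; simpl; [lra|]. rewrite IHm. lra. }
      rewrite E in H.
      destruct (Nat.eqb_spec (S m) (S (S m))); [lia|]. lra.
    + intros k hk. unfold cnext. destruct (Nat.eqb_spec (S k) (S (S m))); [lia|]. reflexivity.
Qed.


Lemma Phi_sub s x : Phi s x -> subdiff_X f s x.
Proof.
  intros hp.
  assert (Hb : forall v, V s v -> v <= pair s x - pair s0 x).
  { intros v [n [qs [qx [hc ->]]]].
    pose proof (vl_s0 _ _ _ (ext_chain n qs qx s x hc hp)) as H.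
    rewrite ext_vl in H. lra. }
  destruct (f_bnd s _ Hb) as [c hc]. exists c. split; [exact hc|].
  intros ys. destruct (f ys) as [d|] eqn:hd; simpl; [|exact I].
  destruct (f_fin s c hc) as [_ hl].
  assert (c <= d - (pair ys x - pair s x)); [|lra].
  apply hl. intros v [n [qs [qx [hch ->]]]].
  pose proof (f_ub ys _ (ex_intro _ (S n) (ex_intro _ (ext_s n qs s)
     (ex_intro _ (ext_x n qx x) (conj (ext_chain n qs qx s x hch hp) eq_refl))))) as H.
  rewrite hd in H. simpl in H. rewrite ext_vl in H. lra.
Qed.

Lemma sub_cyc : wstar_cyclically_monotone (subdiff_X f).
Proof.
  intros n xs x hn hsub.
  set (c := fun k => match f (xs k) with Fin r => r | PInf => 0 end).
  assert (H : forall k, (k < n)%nat ->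
    pair (xs (cnext n k)) (x k) - pair (xs k) (x k) <= c (cnext n k) - c k).
  { intros k hk. destruct (hsub k hk) as [ck [hck hy]].
    assert (hn' : (cnext n k < n)%nat).
    { unfold cnext. destruct (Nat.eqb_spec (S k) n); lia. }
    destruct (hsub _ hn') as [cn [hcn _]].
    specialize (hy (xs (cnext n k))). rewrite hcn in hy. simpl in hy.
    unfold c. rewrite hcn, hck. lra. }
  pose proof (rsum_le n _ _ H) as H2. rewrite rsum_cyc in H2 by lia.
  assert (E : forall m, rsum m (fun k => pair (xs k) (x k) - pair (xs (cnext n k)) (x k))
     = - rsum m (fun k => pair (xs (cnext n k)) (x k) - pair (xs k) (x k))).
  { induction m; simpl; [lra|]. rewrite IHm. lra. }
  rewrite E. lra.
Qed.

End Construction.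

Theorem mainTheorem10 (X : BanachSpace) (Phi : mmap X) :
  wstar_maximal_cyclically_monotone Phi -> dom_nonempty Phi ->
  exists g : dual X -> ereal,
    proper_fun g /\ convex_fun g /\ wstar_lsc g /\
    forall (xs : dual X) (x : X), Phi xs x <-> subdiff_X g xs x.
Proof.
  intros [Hmon [Hcyc Hmax]] [s0 [x0 HP0]].
  exists (f X Phi s0 x0 HP0). split; [|split; [|split]].
  - exists s0. destruct (f_bnd X Phi s0 x0 HP0 s0 0) as [c hc].
    + intros v [n [qs [qx [hc ->]]]]. exact (vl_s0 X Phi s0 x0 Hcyc n qs qx hc).
    + rewrite hc. discriminate.
  - intros a b c t ht hc.
    destruct (f X Phi s0 x0 HP0 a) as [ca|] eqn:ha;
      [|destruct (f X Phi s0 x0 HP0 c); exact I].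
    destruct (f X Phi s0 x0 HP0 b) as [cb|] eqn:hb;
      [|destruct (f X Phi s0 x0 HP0 c); exact I].
    simpl.
    assert (Hb : forall v, V X Phi s0 x0 c v -> v <= t * ca + (1 - t) * cb).
    { intros v [n [qs [qx [hch ->]]]].
      pose proof (proj1 (f_fin _ _ _ _ HP0 a ca ha) _ (ex_intro _ n (ex_intro _ qs
          (ex_intro _ qx (conj hch eq_refl))))) as Ha.
      pose proof (proj1 (f_fin _ _ _ _ HP0 b cb hb) _ (ex_intro _ n (ex_intro _ qs
          (ex_intro _ qx (conj hch eq_refl))))) as Hb.
      unfold vl in *. rewrite hc.
      assert (0 < 1 - t) by lra.
      pose proof (Rmult_le_compat_l t _ _ (Rlt_le _ _ (proj1 ht)) Ha).
      pose proof (Rmult_le_compat_l (1 - t) _ _ (Rlt_le _ _ H) Hb). nra. }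
    destruct (f_bnd _ _ _ _ HP0 c _ Hb) as [cc hcc]. rewrite hcc. simpl.
    exact (proj2 (f_fin _ _ _ _ HP0 c cc hcc) _ Hb).
  - intros r y hy. destruct (f_gt _ _ _ _ HP0 y r hy) as [v [[n [qs [qx [hch ->]]]] hr]].
    exists (cons (qx n) nil), (vl X n qs qx y - r). split; [lra|].
    intros z hz. specialize (hz (qx n) (or_introl eq_refl)).
    pose proof (f_ub _ _ _ _ HP0 z _ (ex_intro _ n (ex_intro _ qs
          (ex_intro _ qx (conj hch eq_refl))))) as H.
    destruct (f X Phi s0 x0 HP0 z); simpl in *; [|tauto].
    unfold vl in *. apply Rabs_def2 in hz. lra.
  - intros s x. symmetry. apply Hmax.
    + apply sub_cyc.
    + intros s' x' hp. apply Phi_sub; assumption.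
Qed.
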